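(* The full subcategory $\mathsf{Cat}_{\mathrm{sep}}(\mathbb T)$ of L-separated $\mathbb T$-categories is an epi-reflective subcategory of $\mathsf{Cat}(\mathbb T)$, where for each $\mathbb T$-category $X$ the reflection map is the (corestricted) Yoneda functor $y_X:X\to y_X(X)$, with $y_X(X)\subseteq\hat X$ carrying the induced structure. Hence limits of L-separated $\mathbb T$-categories are formed in $\mathsf{Cat}(\mathbb T)$, while colimits are obtained by reflecting the colimit formed in $\mathsf{Cat}(\mathbb T)$. The epimorphisms in $\mathsf{Cat}_{\mathrm{sep}}(\mathbb T)$ are precisely the L-dense $\mathbb T$-functors.
   Context: Let $\mathsf V=(\mathsf V,\otimes,k)$ be a commutative unital quantale (complete lattice, commutative associative $\otimes$ with neutral $k$, $u\otimes(-)$ preserving suprema), internal hom $z\le u\multimap v\iff z\otimes u\le v$. A $\mathsf V$-relation $r$ from $X$ to $Y$ is a map $X\times Y\to\mathsf V$; composition $(s\cdot r)(x,z)=\bigvee_y r(x,y)\otimes s(y,z)$, converse $r^\circ(y,x)=r(x,y)$, pointwise order; a map $f$ is the relation $f(x,y)=k$ if $f(x)=y$, $\bot$ otherwise. Let $\mathbb T=(T,e,m)$ be a Set-monad with $T1=1$, $T$ sending pullbacks to weak pullbacks and each naturality square of $m$ a weak pullback, and $\xi:T\mathsf V\to\mathsf V$ with $\xi e_{\mathsf V}=1$, $\xi\cdot T\xi=\xi\cdot m_{\mathsf V}$, $\xi\cdot T(\otimes)=\otimes\cdot\langle\xi T\pi_1,\xi T\pi_2\rangle$, $\xi\cdot Tk=k$,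 and such that $\varphi\mapsto\xi\cdot T\varphi$, $\mathsf V^X\to\mathsf V^{TX}$, is natural w.r.t. the monotone maps $P_{\mathsf V}f(\varphi)(y)=\bigvee_{f(x)=y}\varphi(x)$ (a strict topological theory). For a relation $r$ from $X$ to $Y$ let $T_\xi r(\mathfrak x,\mathfrak y)=\bigvee\{\xi(Tr(\mathfrak w))\mid\mathfrak w\in T(X\times Y),T\pi_1\mathfrak w=\mathfrak x,T\pi_2\mathfrak w=\mathfrak y\}$. A $\mathbb T$-relation from $X$ to $Y$ is a $\mathsf V$-relation from $TX$ to $Y$; Kleisli composition $b\circ a=b\cdot T_\xi a\cdot m_X^\circ$. A $\mathbb T$-category $(X,a)$ has $k\le a(e_X(x),x)$ and $a\circ a\le a$; a $\mathbb T$-functor $f:(X,a)\to(Y,b)$ satisfies $a(\mathfrak x,x)\le b(Tf(\mathfrak x),f(x))$; $\mathsf{Cat}(\mathbb T)$ is the resulting category; subsets carry the induced structure. For a $\mathbb T$-functor $f:X\to(Y,b)$: $f_*(\mathfrak x,y)=b(Tf(\mathfrak x),y)$, $f^*(\mathfrak y,x)=b(\mathfrak y,f(x))$; $f$ is L-dense if $f_*\circ f^*=b$. For $\mathbb T$-functors $f,g:Z\to(X,a)$, $f\le g$ iff $k\le a(e_X(f(z)),g(z))$ for all $z$, $f\cong g$ iff $f\le g\le f$; $X$ is L-separated if $f\cong g$ implies $f=g$ for all such $f,g$. Yoneda: $\mathsf V$ is a $\mathbb T$-category with $\hom_\xi(\mathfrak v,v)=\xi(\mathfrak v)\multimap v$;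 $|X|=(TX,m_X)$; $|X|\multimap\mathsf V$ is the set of $\mathbb T$-functors $|X|\to\mathsf V$ with structure $[m_X,\hom_\xi](\mathfrak p,h)=\bigwedge\{\xi(T\mathrm{ev}(\mathfrak q))\multimap h(m_X(T\pi_1\mathfrak q))\mid\mathfrak q\in T(TX\times(|X|\multimap\mathsf V)),T\pi_2\mathfrak q=\mathfrak p\}$, $\mathrm{ev}(\mathfrak x,\varphi)=\varphi(\mathfrak x)$. With $r(\mathfrak x,\mathfrak y)=\bigvee_{m_X(\mathfrak X)=\mathfrak x}T_\xi a(\mathfrak X,\mathfrak y)$, $X^{\mathrm{op}}=(TX,c)$ with $c(\mathfrak X,\mathfrak y)=T_\xi(r^\circ)(\mathfrak X,e_{TX}(\mathfrak y))$. $\hat X\subseteq|X|\multimap\mathsf V$ consists of those $\psi$ that are also $\mathbb T$-functors $X^{\mathrm{op}}\to\mathsf V$ (induced structure); $y_X:X\to\hat X$, $y_X(x)(\mathfrak x)=a(\mathfrak x,x)$. *)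

(* Defs.v *)
Record Quantale : Type := {
  qV :> Type;
  qle : qV -> qV -> Prop;
  qsup : (qV -> Prop) -> qV;
  qten : qV -> qV -> qV;
  qk : qV;
  qle_refl : forall u, qle u u;
  qle_trans : forall u v w, qle u v -> qle v w -> qle u w;
  qle_antisym : forall u v, qle u v -> qle v u -> u = v;
  qsup_ub : forall (S : qV -> Prop) u, S u -> qle u (qsup S);
  qsup_least : forall (S : qV -> Prop) w, (forall u, S u -> qle u w) -> qle (qsup S) w;
  qten_comm : forall u v, qten u v = qten v u;
  qten_assoc : forall u v w, qten u (qten v w) = qten (qten u v) w;
  qten_k : forall u, qten qk u = u;
  qten_sup : forall u (S : qV -> Prop),
      qten u (qsup S) = qsup (fun w => exists v, S v /\ w = qten u v)
}.

Arguments qle {_}. Arguments qsup {_}. Arguments qten {_}. Arguments qk {_}.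

Definition qbot {Q : Quantale} : Q := qsup (fun _ => False).
Definition qinf {Q : Quantale} (S : Q -> Prop) : Q :=
  qsup (fun z => forall v, S v -> qle z v).
Definition qimp {Q : Quantale} (u v : Q) : Q := qsup (fun z => qle (qten z u) v).

Record SetMonad : Type := {
  mT : Type -> Type;
  mmap : forall A B : Type, (A -> B) -> mT A -> mT B;
  meta : forall A : Type, A -> mT A;
  mmu : forall A : Type, mT (mT A) -> mT A;
  mmap_id : forall A (t : mT A), mmap A A (fun x => x) t = t;
  mmap_comp : forall A B C (f : A -> B) (g : B -> C) (t : mT A),
      mmap A C (fun x => g (f x)) t = mmap B C g (mmap A B f t);
  meta_nat : forall A B (f : A -> B) (x : A), mmap A B f (meta A x) = meta B (f x);
  mmu_nat : forall A B (f : A -> B) (t : mT (mT A)),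
      mmap A B f (mmu A t) = mmu B (mmap (mT A) (mT B) (mmap A B f) t);
  mmu_meta : forall A (t : mT A), mmu A (meta (mT A) t) = t;
  mmu_mmap_meta : forall A (t : mT A), mmu A (mmap A (mT A) (meta A) t) = t;
  mmu_assoc : forall A (t : mT (mT (mT A))),
      mmu A (mmu (mT A) t) = mmu A (mmap (mT (mT A)) (mT A) (mmu A) t)
}.

Arguments mmap {_ _ _}. Arguments meta {_ _}. Arguments mmu {_ _}.

Section MonadConds.
Context {M : SetMonad}.
Local Notation T := (mT M).

Definition T_one : Prop := forall a b : T unit, a = b.

Definition T_weak_pullbacks : Prop :=
  forall (A B C : Type) (f : A -> C) (g : B -> C) (ta : T A) (tb : T B),
    mmap f ta = mmap g tb ->
    exists tp : T {p : A * B | f (fst p) = g (snd p)},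
      mmap (fun p => fst (proj1_sig p)) tp = ta /\
      mmap (fun p => snd (proj1_sig p)) tp = tb.

Definition mu_weak_pullbacks : Prop :=
  forall (A B : Type) (f : A -> B) (ta : T A) (ttb : T (T B)),
    mmap f ta = mmu ttb ->
    exists tta : T (T A), mmu tta = ta /\ mmap (mmap f) tta = ttb.
End MonadConds.

Definition PV {Q : Quantale} {X Y : Type} (f : X -> Y) (phi : X -> Q) : Y -> Q :=
  fun y => qsup (fun w => exists x, f x = y /\ w = phi x).

Record TopTheory (Q : Quantale) (M : SetMonad) : Type := {
  xi : mT M Q -> Q;
  xi_eta : forall v : Q, xi (meta v) = v;
  xi_mu : forall t : mT M (mT M Q), xi (mmap xi t) = xi (mmu t);
  xi_ten : forall t : mT M (Q * Q),
      xi (mmap (fun p => qten (fst p) (snd p)) t)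
      = qten (xi (mmap fst t)) (xi (mmap snd t));
  xi_k : forall t : mT M unit, xi (mmap (fun _ => qk) t) = qk;
  xi_nat : forall (X Y : Type) (f : X -> Y) (phi : X -> Q) (ty : mT M Y),
      PV (mmap f) (fun tx => xi (mmap phi tx)) ty = xi (mmap (PV f phi) ty)
}.
Arguments xi {_ _}.

Section TCats.
Context {Q : Quantale} {M : SetMonad}.
Local Notation T := (mT M).

Definition Vrel (X Y : Type) := X -> Y -> Q.
Definition rcomp {X Y Z : Type} (s : Vrel Y Z) (r : Vrel X Y) : Vrel X Z :=
  fun x z => qsup (fun w => exists y, w = qten (r x y) (s y z)).
Definition rconv {X Y : Type} (r : Vrel X Y) : Vrel Y X := fun y x => r x y.
Definition rgraph {X Y : Type} (f : X -> Y) : Vrel X Y :=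
  fun x y => qsup (fun w => f x = y /\ w = qk).
Definition rle {X Y : Type} (r s : Vrel X Y) : Prop :=
  forall x y, qle (r x y) (s x y).

Definition Txi (Th : TopTheory Q M) {X Y : Type} (r : Vrel X Y) : Vrel (T X) (T Y) :=
  fun tx ty => qsup (fun w => exists tw : T (X * Y),
      mmap fst tw = tx /\ mmap snd tw = ty /\
      w = xi Th (mmap (fun p => r (fst p) (snd p)) tw)).

Definition Trel (X Y : Type) := Vrel (T X) Y.
Definition kcomp (Th : TopTheory Q M) {X Y Z : Type} (b : Trel Y Z) (a : Trel X Y)
  : Trel X Z :=
  rcomp b (rcomp (Txi Th a) (rconv (rgraph (@mmu M X)))).

Record TGraph : Type := { tcar : Type; tstr : Trel tcar tcar }.

Definition is_TCat (Th : TopTheory Q M) (X : TGraph) : Prop :=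
  (forall x : tcar X, qle qk (tstr X (meta x) x)) /\
  rle (kcomp Th (tstr X) (tstr X)) (tstr X).

Definition is_TFun (X Y : TGraph) (f : tcar X -> tcar Y) : Prop :=
  forall (tx : T (tcar X)) (x : tcar X), qle (tstr X tx x) (tstr Y (mmap f tx) (f x)).

Definition subTG (X : TGraph) (P : tcar X -> Prop) : TGraph :=
  {| tcar := {x : tcar X | P x};
     tstr := fun t s => tstr X (mmap (@proj1_sig _ _) t) (proj1_sig s) |}.

Definition fdown {X Y : TGraph} (f : tcar X -> tcar Y) : Trel (tcar X) (tcar Y) :=
  fun tx y => tstr Y (mmap f tx) y.
Definition fup {X Y : TGraph} (f : tcar X -> tcar Y) : Trel (tcar Y) (tcar X) :=
  fun ty x => tstr Y ty (f x).
Definition L_dense (Th : TopTheory Q M) (X Y : TGraph) (f : tcar X -> tcar Y) : Prop :=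
  forall ty y, kcomp Th (@fdown X Y f) (@fup X Y f) ty y = tstr Y ty y.

Definition TFle (X Z : TGraph) (f g : tcar Z -> tcar X) : Prop :=
  forall z, qle qk (tstr X (meta (f z)) (g z)).
Definition L_separated (Th : TopTheory Q M) (X : TGraph) : Prop :=
  forall (Z : TGraph), is_TCat Th Z ->
  forall f g : tcar Z -> tcar X, is_TFun Z X f -> is_TFun Z X g ->
    TFle X Z f g -> TFle X Z g f -> forall z, f z = g z.

Definition Vgraph (Th : TopTheory Q M) : TGraph :=
  {| tcar := Q; tstr := fun tv v => qimp (xi Th tv) v |}.
Definition freeTG (X : TGraph) : TGraph :=
  {| tcar := T (tcar X); tstr := rgraph (@mmu M (tcar X)) |}.
Definition LVcar (Th : TopTheory Q M) (X : TGraph) : Type :=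
  {phi : T (tcar X) -> Q | is_TFun (freeTG X) (Vgraph Th) phi}.
Definition LV (Th : TopTheory Q M) (X : TGraph) : TGraph :=
  {| tcar := LVcar Th X;
     tstr := fun tp h => qinf (fun w =>
        exists tq : T (T (tcar X) * LVcar Th X),
          mmap snd tq = tp /\
          w = qimp (xi Th (mmap (fun p => proj1_sig (snd p) (fst p)) tq))
                   (proj1_sig h (mmu (mmap fst tq)))) |}.
Definition rYon (Th : TopTheory Q M) (X : TGraph) : Vrel (T (tcar X)) (T (tcar X)) :=
  fun tx ty => qsup (fun w => exists tX : T (T (tcar X)),
     mmu tX = tx /\ w = Txi Th (tstr X) tX ty).
Definition Xop (Th : TopTheory Q M) (X : TGraph) : TGraph :=
  {| tcar := T (tcar X);
     tstr := fun tX ty => Txi Th (rconv (rYon Th X)) tX (meta ty) |}.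
Definition Hat (Th : TopTheory Q M) (X : TGraph) : TGraph :=
  subTG (LV Th X) (fun psi => is_TFun (Xop Th X) (Vgraph Th) (proj1_sig psi)).
Definition yoneda (X : TGraph) (x : tcar X) : T (tcar X) -> Q := fun tx => tstr X tx x.
Definition YX (Th : TopTheory Q M) (X : TGraph) : TGraph :=
  subTG (Hat Th X) (fun psi => exists x, proj1_sig (proj1_sig psi) = yoneda X x).
Definition is_yoneda_corestr (Th : TopTheory Q M) (X : TGraph)
  (yc : tcar X -> tcar (YX Th X)) : Prop :=
  forall x, proj1_sig (proj1_sig (proj1_sig (yc x))) = yoneda X x.

(** ** Categorical notions (in the full subcategory of Cat(T) given by P) *)
Definition is_epi_in (Th : TopTheory Q M) (P : TGraph -> Prop) (X Y : TGraph)
  (f : tcar X -> tcar Y) : Prop :=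
  forall Z : TGraph, is_TCat Th Z -> P Z ->
  forall g h : tcar Y -> tcar Z, is_TFun Y Z g -> is_TFun Y Z h ->
    (forall x, g (f x) = h (f x)) -> forall y, g y = h y.

Definition is_reflection_in (Th : TopTheory Q M) (P : TGraph -> Prop) (X R : TGraph)
  (r : tcar X -> tcar R) : Prop :=
  is_TCat Th R /\ P R /\ is_TFun X R r /\
  forall Z : TGraph, is_TCat Th Z -> P Z ->
  forall f : tcar X -> tcar Z, is_TFun X Z f ->
    exists g : tcar R -> tcar Z, is_TFun R Z g /\ (forall x, g (r x) = f x) /\
      forall g' : tcar R -> tcar Z, is_TFun R Z g' -> (forall x, g' (r x) = f x) ->
        forall w, g' w = g w.

Record Diagram : Type := {
  dI : Type; dE : Type; dsrc : dE -> dI; dtgt : dE -> dI;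
  dobj : dI -> TGraph;
  dmor : forall e : dE, tcar (dobj (dsrc e)) -> tcar (dobj (dtgt e)) }.

Definition diagram_in (Th : TopTheory Q M) (P : TGraph -> Prop) (D : Diagram) : Prop :=
  (forall i, is_TCat Th (dobj D i) /\ P (dobj D i)) /\
  (forall e, is_TFun _ _ (dmor D e)).

Definition is_cone (D : Diagram) (L : TGraph) (p : forall i, tcar L -> tcar (dobj D i))
  : Prop :=
  (forall i, is_TFun L (dobj D i) (p i)) /\
  (forall e x, dmor D e (p (dsrc D e) x) = p (dtgt D e) x).

Definition is_limit_in (Th : TopTheory Q M) (P : TGraph -> Prop) (D : Diagram)
  (L : TGraph) (p : forall i, tcar L -> tcar (dobj D i)) : Prop :=
  is_TCat Th L /\ P L /\ is_cone D L p /\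
  forall Z : TGraph, is_TCat Th Z -> P Z ->
  forall q : forall i, tcar Z -> tcar (dobj D i), is_cone D Z q ->
    exists u : tcar Z -> tcar L, is_TFun Z L u /\ (forall i z, p i (u z) = q i z) /\
      forall u', is_TFun Z L u' -> (forall i z, p i (u' z) = q i z) ->
        forall z, u' z = u z.

Definition is_cocone (D : Diagram) (C : TGraph) (c : forall i, tcar (dobj D i) -> tcar C)
  : Prop :=
  (forall i, is_TFun (dobj D i) C (c i)) /\
  (forall e x, c (dtgt D e) (dmor D e x) = c (dsrc D e) x).

Definition is_colimit_in (Th : TopTheory Q M) (P : TGraph -> Prop) (D : Diagram)
  (C : TGraph) (c : forall i, tcar (dobj D i) -> tcar C) : Prop :=
  is_TCat Th C /\ P C /\ is_cocone D C c /\
  forall Z : TGraph, is_TCat Th Z -> P Z ->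
  forall q : forall i, tcar (dobj D i) -> tcar Z, is_cocone D Z q ->
    exists u : tcar C -> tcar Z, is_TFun C Z u /\ (forall i x, u (c i x) = q i x) /\
      forall u', is_TFun C Z u' -> (forall i x, u' (c i x) = q i x) ->
        forall w, u' w = u w.

End TCats.

(* Main.v *)
Require Import Defs.
From Stdlib Require Import FunctionalExtensionality ProofIrrelevance ClassicalEpsilon.

Section QL.
Context {Q : Quantale}.

Lemma qten_mono_r (u v v' : Q) : qle v v' -> qle (qten u v) (qten u v').
Proof.
  intro H.
  assert (Hs : qsup (fun w => w = v \/ w = v') = v').
  { apply qle_antisym.
    - apply qsup_least; intros w [->| ->]; [exact H| apply qle_refl].
    - apply qsup_ub; right; reflexivity. }
  rewrite <- Hs, qten_sup. apply qsup_ub. exists v; split; [left; reflexivity| reflexivity].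
Qed.

Lemma qten_mono_l (u u' v : Q) : qle u u' -> qle (qten u v) (qten u' v).
Proof. intro H. rewrite (qten_comm _ u), (qten_comm _ u'). now apply qten_mono_r. Qed.

Lemma qten_mono (u u' v v' : Q) : qle u u' -> qle v v' -> qle (qten u v) (qten u' v').
Proof. intros H1 H2. eapply qle_trans; [apply qten_mono_l; exact H1| apply qten_mono_r; exact H2]. Qed.

Lemma qten_k_r (u : Q) : qten u qk = u.
Proof. rewrite qten_comm; apply qten_k. Qed.

Lemma qten_sup_r_le (u w : Q) (S : Q -> Prop) :
  (forall s, S s -> qle (qten u s) w) -> qle (qten u (qsup S)) w.
Proof. intro H. rewrite qten_sup. apply qsup_least. intros w' [v [Hv ->]]. auto. Qed.

Lemma qten_sup_l_le (u w : Q) (S : Q -> Prop) :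
  (forall s, S s -> qle (qten s u) w) -> qle (qten (qsup S) u) w.
Proof. intro H. rewrite qten_comm. apply qten_sup_r_le. intros s Hs. rewrite qten_comm; auto. Qed.

Lemma qimp_intro (z u v : Q) : qle (qten z u) v -> qle z (qimp u v).
Proof. intro H. unfold qimp. apply qsup_ub. exact H. Qed.

Lemma qimp_counit (u v : Q) : qle (qten (qimp u v) u) v.
Proof. unfold qimp. apply qten_sup_l_le. intros s Hs; exact Hs. Qed.

Lemma qimp_elim (z u v : Q) : qle z (qimp u v) -> qle (qten z u) v.
Proof. intro H. eapply qle_trans; [apply qten_mono_l; exact H| apply qimp_counit]. Qed.

Lemma qinf_lb (S : Q -> Prop) v : S v -> qle (qinf S) v.
Proof. intro H. unfold qinf. apply qsup_least. intros z Hz. auto. Qed.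

Lemma qinf_glb (S : Q -> Prop) z : (forall v, S v -> qle z v) -> qle z (qinf S).
Proof. intro H. unfold qinf. apply qsup_ub. exact H. Qed.

Lemma qimp_le_k (u v : Q) : qle qk u -> qle (qimp u v) v.
Proof.
  intro H. eapply qle_trans; [| apply (qimp_counit u v)].
  rewrite <- (qten_k_r (qimp u v)) at 1. apply qten_mono_r; exact H.
Qed.
End QL.

Section ML.
Context {M : SetMonad}.

Lemma mmap_comp' A B C (f : A -> B) (g : B -> C) (t : mT M A) :
  mmap g (mmap f t) = mmap (fun x => g (f x)) t.
Proof. symmetry; apply mmap_comp. Qed.

Lemma mmap_ext A B (f g : A -> B) (t : mT M A) :
  (forall x, f x = g x) -> mmap f t = mmap g t.
Proof. intro H. replace g with f; [reflexivity| apply functional_extensionality; exact H]. Qed.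

Lemma T_const (HT1 : @T_one M) A B (c : B) (t : mT M A) :
  mmap (fun _ => c) t = meta c.
Proof.
  transitivity (mmap (fun _ : unit => c) (mmap (fun _ => tt) t)).
  - rewrite mmap_comp'. reflexivity.
  - rewrite (HT1 (mmap (fun _ => tt) t) (meta tt)). apply meta_nat.
Qed.
End ML.
Section TH.
Context {Q : Quantale} {M : SetMonad} (Th : TopTheory Q M).
Local Notation T := (mT M).

Lemma xi_const (HT1 : @T_one M) A (v : Q) (t : T A) : xi Th (mmap (fun _ => v) t) = v.
Proof. rewrite (T_const HT1). apply xi_eta. Qed.

Lemma xi_mono A (phi psi : A -> Q) (t : T A) :
  (forall x, qle (phi x) (psi x)) -> qle (xi Th (mmap phi t)) (xi Th (mmap psi t)).
Proof.
  intro H.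
  pose (f := fun s : A + A => match s with inl a => a | inr a => a end).
  pose (phi' := fun s : A + A => match s with inl a => phi a | inr a => psi a end).
  assert (HP : PV f phi' = psi).
  { apply functional_extensionality. intro y. unfold PV. apply qle_antisym.
    - apply qsup_least. intros w [s [Hs ->]]. destruct s; simpl in Hs; subst; simpl.
      + apply H.
      + apply qle_refl.
    - apply qsup_ub. exists (inr y). split; reflexivity. }
  pose proof (xi_nat Q M Th (A + A) A f phi' t) as HN. rewrite HP in HN.
  rewrite <- HN. unfold PV. apply qsup_ub. exists (mmap inl t). split.
  - unfold f. rewrite mmap_comp'. apply mmap_id.
  - rewrite mmap_comp'. reflexivity.
Qed.

Lemma xi_ten2 A (phi psi : A -> Q) (t : T A) :
  xi Th (mmap (fun z => qten (phi z) (psi z)) t) = qten (xi Th (mmap phi t)) (xi Th (mmap psi t)).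
Proof.
  pose proof (xi_ten Q M Th (mmap (fun z => (phi z, psi z)) t)) as H.
  rewrite !mmap_comp' in H. exact H.
Qed.

Lemma xi_ge_k (HT1 : @T_one M) A (phi : A -> Q) (t : T A) :
  (forall x, qle qk (phi x)) -> qle qk (xi Th (mmap phi t)).
Proof.
  intro H. rewrite <- (xi_const HT1 A qk t) at 1. apply xi_mono. exact H.
Qed.

Lemma Txi_ge {X Y} (r : Vrel X Y) (tw : T (X * Y)) :
  qle (xi Th (mmap (fun p => r (fst p) (snd p)) tw)) (Txi Th r (mmap fst tw) (mmap snd tw)).
Proof. unfold Txi. apply qsup_ub. exists tw. auto. Qed.

Lemma Txi_le {X Y} (r : Vrel X Y) tx ty w :
  (forall tw : T (X * Y), mmap fst tw = tx -> mmap snd tw = ty ->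
     qle (xi Th (mmap (fun p => r (fst p) (snd p)) tw)) w) ->
  qle (Txi Th r tx ty) w.
Proof. intro H. unfold Txi. apply qsup_least. intros s [tw [H1 [H2 ->]]]. auto. Qed.

Lemma Txi_le_map {X Y X' Y'} (r : Vrel X Y) (r' : Vrel X' Y') (F : X -> X') (G : Y -> Y') tx ty :
  (forall u v, qle (r u v) (r' (F u) (G v))) ->
  qle (Txi Th r tx ty) (Txi Th r' (mmap F tx) (mmap G ty)).
Proof.
  intro H. apply Txi_le. intros tw E1 E2.
  pose (tw' := mmap (fun p => (F (fst p), G (snd p))) tw).
  assert (F1 : mmap fst tw' = mmap F tx) by (subst; unfold tw'; rewrite !mmap_comp'; reflexivity).
  assert (F2 : mmap snd tw' = mmap G ty) by (subst; unfold tw'; rewrite !mmap_comp'; reflexivity).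
  rewrite <- F1, <- F2. eapply qle_trans; [| apply Txi_ge].
  unfold tw'. rewrite mmap_comp'. apply xi_mono. intro p. apply H.
Qed.

Lemma Txi_eta {X Y} (r : Vrel X Y) u v : qle (r u v) (Txi Th r (meta u) (meta v)).
Proof.
  pose proof (Txi_ge r (meta (u, v))) as H. rewrite !meta_nat in H. simpl in H.
  rewrite xi_eta in H. exact H.
Qed.

Lemma xi_row_le (HT1 : @T_one M) {X Y} (r : Vrel X Y) c t :
  qle (xi Th (mmap (fun y => r c y) t)) (Txi Th r (meta c) t).
Proof.
  pose proof (Txi_ge r (mmap (fun y => (c, y)) t)) as H. rewrite !mmap_comp' in H. cbn in H.
  rewrite (T_const HT1), mmap_id in H. exact H.
Qed.

Lemma xi_col_le (HT1 : @T_one M) {X Y} (r : Vrel X Y) c t :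
  qle (xi Th (mmap (fun y => r y c) t)) (Txi Th r t (meta c)).
Proof.
  pose proof (Txi_ge r (mmap (fun y => (y, c)) t)) as H. rewrite !mmap_comp' in H. cbn in H.
  rewrite (T_const HT1), mmap_id in H. exact H.
Qed.

Lemma kcomp_ge {X Y Z} (b : Trel Y Z) (a : Trel X Y) tx (tY : T (T X)) y z :
  mmu tY = tx -> qle (qten (Txi Th a tY y) (b y z)) (kcomp Th b a tx z).
Proof.
  intro Hm. unfold kcomp, rcomp.
  eapply qle_trans; [| apply qsup_ub; exists y; reflexivity].
  apply qten_mono_l.
  eapply qle_trans; [| apply qsup_ub; exists tY; reflexivity].
  apply qle_trans with (qten qk (Txi Th a tY y)); [rewrite qten_k; apply qle_refl|].
  apply qten_mono_l. unfold rconv, rgraph. apply qsup_ub. auto.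
Qed.

Lemma kcomp_le {X Y Z} (b : Trel Y Z) (a : Trel X Y) tx z w :
  (forall (tY : T (T X)) y, mmu tY = tx -> qle (qten (Txi Th a tY y) (b y z)) w) ->
  qle (kcomp Th b a tx z) w.
Proof.
  intro H. unfold kcomp, rcomp. apply qsup_least. intros w' [y ->].
  apply qten_sup_l_le. intros s [tY ->]. unfold rconv, rgraph.
  rewrite <- qten_assoc. apply qten_sup_l_le. intros s [Hm ->]. rewrite qten_k. auto.
Qed.

Lemma tcat_trans (X : TGraph) (HX : is_TCat Th X) (tY : T (T (tcar X))) tx y z :
  mmu tY = tx -> qle (qten (Txi Th (tstr X) tY y) (tstr X y z)) (tstr X tx z).
Proof. intro Hm. eapply qle_trans; [apply kcomp_ge; exact Hm| apply (proj2 HX)]. Qed.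

Lemma tcat_trans_e (X : TGraph) (HX : is_TCat Th X) tx x z :
  qle (qten (tstr X tx x) (tstr X (meta x) z)) (tstr X tx z).
Proof.
  apply qle_trans with (qten (Txi Th (tstr X) (meta tx) (meta x)) (tstr X (meta x) z)).
  - apply qten_mono_l. apply Txi_eta.
  - apply tcat_trans; auto. apply mmu_meta.
Qed.

End TH.
Section YON.
Context {Q : Quantale} {M : SetMonad} (Th : TopTheory Q M) (HT1 : @T_one M)
  (HTpb : @T_weak_pullbacks M).
Local Notation T := (mT M).

Lemma yon_free (X : @TGraph Q M) (HX : is_TCat Th X) x :
  is_TFun (freeTG X) (Vgraph Th) (yoneda X x).
Proof.
  intros tX tx. simpl. unfold rgraph. apply qsup_least. intros w [Hm ->].
  apply qimp_intro. rewrite qten_k. unfold yoneda. subst tx.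
  eapply qle_trans; [apply (xi_col_le Th HT1 (tstr X) x tX)|].
  apply qle_trans with (qten (Txi Th (tstr X) tX (meta x)) qk); [rewrite qten_k_r; apply qle_refl|].
  eapply qle_trans; [apply qten_mono_r; apply (proj1 HX)| apply tcat_trans; auto].
Qed.

Lemma yon_op (X : @TGraph Q M) (HX : is_TCat Th X) x :
  is_TFun (Xop Th X) (Vgraph Th) (yoneda X x).
Proof.
  intros tX ty. simpl. apply qimp_intro. unfold Txi at 1. apply qten_sup_l_le.
  intros s [tw [E1 [E2 ->]]]. subst tX. rewrite mmap_comp'. rewrite <- xi_ten2.
  eapply qle_trans; [apply xi_mono with (psi := fun p => tstr X (snd p) x)|].
  - intro p. unfold rconv, rYon. apply qten_sup_l_le. intros s [tY [Hm ->]].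
    unfold yoneda. apply tcat_trans; auto.
  - replace (mmap (fun p => tstr X (snd p) x) tw) with (mmap (fun y => tstr X y x) (mmap snd tw))
      by (rewrite mmap_comp'; reflexivity).
    rewrite E2, meta_nat, xi_eta. apply qle_refl.
Qed.

Lemma yon_LV (X : @TGraph Q M) (HX : is_TCat Th X) (ylv : tcar X -> LVcar Th X)
  (Hy : forall x, proj1_sig (ylv x) = yoneda X x) tx x :
  tstr (LV Th X) (mmap ylv tx) (ylv x) = tstr X tx x.
Proof.
  apply qle_antisym.
  - simpl. eapply qle_trans; [apply qinf_lb; exists (mmap (fun x' => (meta x', ylv x')) tx); split;
      [rewrite mmap_comp'; reflexivity| reflexivity]|].
    rewrite !mmap_comp'. simpl. rewrite mmu_mmap_meta, Hy.
    apply qimp_le_k. apply xi_ge_k; auto. intro x'. rewrite Hy. apply (proj1 HX).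
  - simpl. apply qinf_glb. intros w [tq [Htq ->]]. apply qimp_intro.
    destruct (HTpb _ _ _ snd ylv tq tx Htq) as [tp [E1 E2]].
    rewrite <- E1, <- E2, Hy. rewrite !mmap_comp'.
    rewrite (mmap_ext _ _ _ (fun z => tstr X (fst (fst (proj1_sig z))) (snd (proj1_sig z)))).
    2:{ intros [[[u phi] x'] Hz]. simpl in *. subst phi. rewrite Hy. reflexivity. }
    rewrite qten_comm. unfold yoneda.
    eapply qle_trans; [| apply tcat_trans; [exact HX| reflexivity]].
    apply qten_mono_l.
    pose proof (Txi_ge Th (tstr X) (mmap (fun z => (fst (fst (proj1_sig z)), snd (proj1_sig z))) tp)) as H.
    rewrite !mmap_comp' in H. exact H.
Qed.

End YON.
Lemma sig_eq_PI {A} {P : A -> Prop} (u v : sig P) : proj1_sig u = proj1_sig v -> u = v.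
Proof.
  destruct u as [u Hu], v as [v Hv]. simpl. intros ->. f_equal. apply proof_irrelevance.
Qed.

Section GEN.
Context {Q : Quantale} {M : SetMonad} (Th : TopTheory Q M) (HT1 : @T_one M).
Local Notation T := (mT M).

Definition ptG : @TGraph Q M := {| tcar := unit; tstr := fun _ _ => qk |}.

Lemma ptG_cat : is_TCat Th ptG.
Proof.
  split.
  - intro; apply qle_refl.
  - intros tx z. apply kcomp_le. intros tY y _. simpl. rewrite qten_k_r.
    apply Txi_le. intros tw _ _. simpl. rewrite (xi_const Th HT1). apply qle_refl.
Qed.

Lemma Lsep_pts (Z : @TGraph Q M) (HZ : is_TCat Th Z) (HS : L_separated Th Z) z1 z2 :
  qle qk (tstr Z (meta z1) z2) -> qle qk (tstr Z (meta z2) z1) -> z1 = z2.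
Proof.
  intros H1 H2.
  assert (Hc : forall z, is_TFun ptG Z (fun _ => z)).
  { intros z t u. simpl. rewrite (T_const HT1). apply (proj1 HZ). }
  apply (HS ptG ptG_cat (fun _ => z1) (fun _ => z2) (Hc z1) (Hc z2)); [intro; exact H1| intro; exact H2| exact tt].
Qed.

Lemma TFun_comp (X Y Z : @TGraph Q M) f g :
  is_TFun X Y f -> is_TFun Y Z g -> is_TFun X Z (fun x => g (f x)).
Proof.
  intros Hf Hg tx x. eapply qle_trans; [apply Hf|]. eapply qle_trans; [apply Hg|].
  rewrite mmap_comp'. apply qle_refl.
Qed.

Lemma initial_TCat (X R : @TGraph Q M) (HX : is_TCat Th X) (s : tcar R -> tcar X)
  (Hs : forall p q, tstr R p q = tstr X (mmap s p) (s q)) : is_TCat Th R.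
Proof.
  split.
  - intro q. rewrite Hs, meta_nat. apply (proj1 HX).
  - intros tx z. apply kcomp_le. intros tY y Hm. rewrite !Hs.
    eapply qle_trans; [apply qten_mono_l; apply (Txi_le_map Th (tstr R) (tstr X) (mmap s) s)|].
    + intros u v. rewrite Hs. apply qle_refl.
    + apply tcat_trans; auto. rewrite <- Hm. symmetry. apply mmu_nat.
Qed.

Lemma Vgraph_cat : is_TCat Th (Vgraph Th).
Proof.
  split.
  - intro v. simpl. rewrite xi_eta. apply qimp_intro. rewrite qten_k. apply qle_refl.
  - intros tv v. apply kcomp_le. intros tV tu Hm. simpl. apply qimp_intro.
    rewrite <- qten_assoc, (qten_comm _ (qimp _ _)), qten_assoc.
    eapply qle_trans; [apply qten_mono_l| rewrite qten_comm; apply qimp_counit].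
    subst tv. apply qten_sup_l_le. intros s [tw [E1 [E2 ->]]]. subst.
    rewrite <- xi_mu, mmap_comp', <- xi_ten2. apply xi_mono. intro p. apply qimp_counit.
Qed.

Lemma Vgraph_sep : L_separated Th (Vgraph Th).
Proof.
  intros Z HZ f g Hf Hg H1 H2 z. specialize (H1 z). specialize (H2 z). simpl in *.
  rewrite xi_eta in H1, H2. apply qimp_elim in H1. apply qimp_elim in H2.
  rewrite qten_k in H1, H2. apply qle_antisym; auto.
Qed.

End GEN.
Section YX.
Context {Q : Quantale} {M : SetMonad} (Th : TopTheory Q M) (HT1 : @T_one M)
  (HTpb : @T_weak_pullbacks M).
Local Notation T := (mT M).

Lemma yc_exists (X : @TGraph Q M) (HX : is_TCat Th X) :
  exists yc : tcar X -> tcar (YX Th X), is_yoneda_corestr Th X yc.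
Proof.
  unshelve eexists.
  - intro x. unshelve refine (exist _ (exist _ (exist _ (yoneda X x) _) _) _).
    + exact (yon_free Th HT1 X HX x).
    + exact (yon_op Th X HX x).
    + exists x. reflexivity.
  - intro x. reflexivity.
Qed.

Context (X : @TGraph Q M) (HX : is_TCat Th X) (yc : tcar X -> tcar (YX Th X))
  (Hyc : is_yoneda_corestr Th X yc).

Lemma YX_str tx x : tstr (YX Th X) (mmap yc tx) (yc x) = tstr X tx x.
Proof.
  change (tstr (LV Th X) (mmap (@proj1_sig _ _) (mmap (@proj1_sig _ _) (mmap yc tx)))
            (proj1_sig (proj1_sig (yc x))) = tstr X tx x).
  rewrite !mmap_comp'. apply (yon_LV Th HT1 HTpb X HX (fun x => proj1_sig (proj1_sig (yc x)))).
  exact Hyc.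
Qed.

Lemma yc_eq x1 x2 : yoneda X x1 = yoneda X x2 -> yc x1 = yc x2.
Proof.
  intro H. apply sig_eq_PI, sig_eq_PI, sig_eq_PI. rewrite !Hyc. exact H.
Qed.

Lemma yc_eq_inv x1 x2 : yc x1 = yc x2 -> yoneda X x1 = yoneda X x2.
Proof. intro H. rewrite <- !Hyc, H. reflexivity. Qed.

Lemma YX_surj w : exists x, yc x = w.
Proof.
  destruct w as [[[phi Hphi] Hop] [x Hx]]. exists x. apply sig_eq_PI, sig_eq_PI, sig_eq_PI.
  simpl in *. rewrite Hyc. auto.
Qed.

Definition ysec (w : tcar (YX Th X)) : tcar X := proj1_sig (constructive_indefinite_description _ (YX_surj w)).
Lemma ysec_spec w : yc (ysec w) = w.
Proof. unfold ysec. destruct (constructive_indefinite_description _ _). exact e. Qed.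

Lemma YX_str_s p q : tstr (YX Th X) p q = tstr X (mmap ysec p) (ysec q).
Proof.
  rewrite <- YX_str, ysec_spec, mmap_comp'. f_equal.
  rewrite (mmap_ext _ _ _ (fun x => x)); [symmetry; apply mmap_id| intro; apply ysec_spec].
Qed.

Lemma YX_cat : is_TCat Th (YX Th X).
Proof. apply (initial_TCat Th X (YX Th X) HX ysec YX_str_s). Qed.

Lemma yc_TFun : is_TFun X (YX Th X) yc.
Proof. intros tx x. rewrite YX_str. apply qle_refl. Qed.

Lemma iso_yon x1 x2 : qle qk (tstr X (meta x1) x2) -> qle qk (tstr X (meta x2) x1) ->
  yoneda X x1 = yoneda X x2.
Proof.
  intros H1 H2. apply functional_extensionality. intro tx. unfold yoneda. apply qle_antisym.
  - eapply qle_trans; [| apply (tcat_trans_e Th X HX tx x1 x2)].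
    rewrite <- (qten_k_r (tstr X tx x1)) at 1. apply qten_mono_r; exact H1.
  - eapply qle_trans; [| apply (tcat_trans_e Th X HX tx x2 x1)].
    rewrite <- (qten_k_r (tstr X tx x2)) at 1. apply qten_mono_r; exact H2.
Qed.

Lemma YX_sep : L_separated Th (YX Th X).
Proof.
  intros Z HZ f g _ _ H1 H2 z. specialize (H1 z). specialize (H2 z).
  destruct (YX_surj (f z)) as [x1 E1]. destruct (YX_surj (g z)) as [x2 E2].
  rewrite <- E1, <- E2 in *. apply yc_eq. apply iso_yon.
  - rewrite <- (YX_str (meta x1) x2), meta_nat. exact H1.
  - rewrite <- (YX_str (meta x2) x1), meta_nat. exact H2.
Qed.

Lemma YX_refl : is_reflection_in Th (L_separated Th) X (YX Th X) yc.
Proof.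
  split; [exact YX_cat|]. split; [exact YX_sep|]. split; [exact yc_TFun|].
  intros Z HZ HS f Hf. exists (fun w => f (ysec w)). split; [|split].
  - intros p q. rewrite YX_str_s. eapply qle_trans; [apply Hf|]. rewrite mmap_comp'. apply qle_refl.
  - intro x. set (x' := ysec (yc x)).
    assert (Ey : yoneda X x' = yoneda X x) by (apply yc_eq_inv; apply ysec_spec).
    apply (Lsep_pts Th HT1 Z HZ HS).
    + rewrite <- (meta_nat M _ _ f x'). eapply qle_trans; [| apply Hf].
      change (qle qk (yoneda X x (meta x'))). rewrite <- Ey. apply (proj1 HX).
    + rewrite <- (meta_nat M _ _ f x). eapply qle_trans; [| apply Hf].
      change (qle qk (yoneda X x' (meta x))). rewrite Ey. apply (proj1 HX).
  - intros g' Hg' Heq w. rewrite <- (ysec_spec w) at 1. apply Heq.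
Qed.

Lemma yc_epi : is_epi_in Th (fun _ => True) X (YX Th X) yc.
Proof.
  intros Z _ _ g h _ _ H w. destruct (YX_surj w) as [x <-]. apply H.
Qed.

End YX.
Section DENSE.
Context {Q : Quantale} {M : SetMonad} (Th : TopTheory Q M) (HT1 : @T_one M).
Local Notation T := (mT M).

Lemma dense_epi (X Y : @TGraph Q M) (HY : is_TCat Th Y) f :
  L_dense Th X Y f -> is_epi_in Th (L_separated Th) X Y f.
Proof.
  intros HD Z HZ HS g0 h0 Hg0 Hh0 E0 y.
  assert (key : forall g h, is_TFun Y Z g -> is_TFun Y Z h -> (forall x, g (f x) = h (f x)) ->
            qle qk (tstr Z (meta (h y)) (g y))).
  { intros g h Hg Hh E. eapply qle_trans; [apply (proj1 HY y)|]. rewrite <- (HD (meta y) y).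
    apply kcomp_le. intros tY tx Hm.
    apply qle_trans with (qten (Txi Th (tstr Z) (mmap (mmap h) tY) (mmap (fun x => h (f x)) tx))
                            (tstr Z (mmap (fun x => h (f x)) tx) (g y))).
    - apply qten_mono.
      + apply Txi_le_map. intros u v. unfold fup. apply Hh.
      + unfold fdown. eapply qle_trans; [apply Hg|]. rewrite mmap_comp'.
        rewrite (mmap_ext _ _ _ (fun x => h (f x))); [apply qle_refl| intro; apply E].
    - eapply qle_trans; [apply tcat_trans; [exact HZ| reflexivity]|].
      rewrite <- mmu_nat, Hm, meta_nat. apply qle_refl. }
  apply (Lsep_pts Th HT1 Z HZ HS).
  - apply key; auto; try (intro x; symmetry; auto).
  - apply key; auto; try (intro x; symmetry; auto).
Qed.

Lemma epi_dense (X Y : @TGraph Q M) (HY : is_TCat Th Y) f :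
  is_epi_in Th (L_separated Th) X Y f -> L_dense Th X Y f.
Proof.
  intros Hepi ty y. apply qle_antisym.
  - apply kcomp_le. intros tY tx Hm.
    eapply qle_trans; [apply qten_mono_l; apply (Txi_le_map Th _ (tstr Y) (fun u => u) f)|].
    + intros u v. apply qle_refl.
    + rewrite mmap_id. apply tcat_trans; auto.
  - pose (gp := fun y' => tstr Y ty y').
    pose (Phi := fun p : T (tcar X) * tcar Y =>
             qten (xi Th (mmap (fun x => gp (f x)) (fst p))) (tstr Y (mmap f (fst p)) (snd p))).
    pose (hp := PV snd Phi).
    assert (Hg : is_TFun Y (Vgraph Th) gp).
    { intros ty' y'. simpl. apply qimp_intro. rewrite qten_comm.
      eapply qle_trans; [apply qten_mono_l; apply (xi_row_le Th HT1 (tstr Y) ty ty')|].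
      apply tcat_trans; auto. apply mmu_meta. }
    assert (Hh : is_TFun Y (Vgraph Th) hp).
    { intros ty' y'. simpl. apply qimp_intro. unfold hp at 1.
      rewrite <- (xi_nat Q M Th _ _ snd Phi ty'). unfold PV at 1.
      apply qten_sup_r_le. intros s [tp [Etp ->]]. subst ty'.
      unfold Phi at 1. rewrite xi_ten2.
      assert (Ea : xi Th (mmap (fun p => xi Th (mmap (fun x => gp (f x)) (fst p))) tp)
                   = xi Th (mmap (fun x => gp (f x)) (mmu (mmap fst tp)))).
      { rewrite mmu_nat, <- xi_mu, !mmap_comp'. reflexivity. }
      assert (Hs : qle (xi Th (mmap (fun p => tstr Y (mmap f (fst p)) (snd p)) tp))
                       (Txi Th (tstr Y) (mmap (mmap f) (mmap fst tp)) (mmap snd tp))).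
      { pose proof (Txi_ge Th (tstr Y) (mmap (fun p => (mmap f (fst p), snd p)) tp)) as H.
        rewrite !mmap_comp' in H. rewrite mmap_comp'. exact H. }
      rewrite Ea.
      eapply qle_trans; [| unfold hp, PV; apply qsup_ub; exists (mmu (mmap fst tp), y'); split; reflexivity].
      unfold Phi; simpl. rewrite qten_comm, <- qten_assoc. apply qten_mono_r.
      eapply qle_trans; [apply qten_mono_l; exact Hs|]. apply tcat_trans; auto.
      symmetry; apply mmu_nat. }
    assert (Efx : forall x, gp (f x) = hp (f x)).
    { intro x. apply qle_antisym.
      - eapply qle_trans; [| unfold hp, PV; apply qsup_ub; exists (meta x, f x); split; reflexivity].
        unfold Phi; simpl. rewrite !meta_nat, xi_eta.
        rewrite <- (qten_k_r (gp (f x))) at 1. apply qten_mono_r. apply (proj1 HY).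
      - unfold hp, PV. apply qsup_least. intros w [[tx y''] [Hp ->]]. simpl in Hp. subst y''.
        unfold Phi; simpl. pose proof (Hg (mmap f tx) (f x)) as H. simpl in H.
        apply qimp_elim in H. rewrite mmap_comp' in H. rewrite qten_comm. exact H. }
    pose proof (Hepi (Vgraph Th) (Vgraph_cat Th) (Vgraph_sep Th) gp hp Hg Hh Efx y) as Ey.
    change (qle (gp y) (kcomp Th (fdown f) (fup f) ty y)). rewrite Ey.
    unfold hp, PV. apply qsup_least. intros w [[tx y''] [Hp ->]]. simpl in Hp. subst y''.
    unfold Phi; simpl.
    eapply qle_trans; [| apply kcomp_ge; apply mmu_meta].
    apply qten_mono_l. apply (xi_row_le Th HT1 (fup f) ty tx).
Qed.

End DENSE.

Theorem mainTheorem17 (Q : Quantale) (M : SetMonad)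
  (HT1 : @T_one M) (HTpb : @T_weak_pullbacks M) (Hmpb : @mu_weak_pullbacks M)
  (Th : TopTheory Q M) :
  (forall X : @TGraph Q M, is_TCat Th X ->
     exists yc : tcar X -> tcar (YX Th X), is_yoneda_corestr Th X yc) /\
  (forall X : @TGraph Q M, is_TCat Th X ->
   forall yc : tcar X -> tcar (YX Th X), is_yoneda_corestr Th X yc ->
     is_reflection_in Th (L_separated Th) X (YX Th X) yc /\
     is_epi_in Th (fun _ => True) X (YX Th X) yc) /\
  (forall (D : @Diagram Q M), diagram_in Th (L_separated Th) D ->
   forall L p, is_limit_in Th (fun _ => True) D L p ->
     is_limit_in Th (L_separated Th) D L p) /\
  (forall (D : @Diagram Q M), diagram_in Th (L_separated Th) D ->
   forall C c, is_colimit_in Th (fun _ => True) D C c ->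
   forall yc : tcar C -> tcar (YX Th C), is_yoneda_corestr Th C yc ->
     is_colimit_in Th (L_separated Th) D (YX Th C) (fun i x => yc (c i x))) /\
  (forall X Y : @TGraph Q M,
     is_TCat Th X -> L_separated Th X -> is_TCat Th Y -> L_separated Th Y ->
   forall f : tcar X -> tcar Y, is_TFun X Y f ->
     (is_epi_in Th (L_separated Th) X Y f <-> L_dense Th X Y f)).
Proof.
  split; [intros X HX; exact (yc_exists Th HT1 X HX)|].
  split; [intros X HX yc Hyc; split; [exact (YX_refl Th HT1 HTpb X HX yc Hyc)| exact (yc_epi Th X yc Hyc)]|].
  split.
  { intros D [HDo HDm] L p [HL [_ [Hc Hu]]]. split; [exact HL|]. split.
    - intros Z HZ f g Hf Hg H1 H2 z.
      assert (Hpi : forall i z, p i (f z) = p i (g z)).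
      { intros i z'. destruct (HDo i) as [HDi HSi].
        apply (HSi Z HZ (fun z => p i (f z)) (fun z => p i (g z))).
        - apply TFun_comp with L; auto. apply (proj1 Hc).
        - apply TFun_comp with L; auto. apply (proj1 Hc).
        - intro z''. eapply qle_trans; [apply (H1 z'')|]. rewrite <- (meta_nat M _ _ (p i)). apply (proj1 Hc i).
        - intro z''. eapply qle_trans; [apply (H2 z'')|]. rewrite <- (meta_nat M _ _ (p i)). apply (proj1 Hc i). }
      assert (Hcone : is_cone D Z (fun i z => p i (f z))).
      { split.
        - intro i. apply TFun_comp with L; auto. apply (proj1 Hc).
        - intros e z'. apply (proj2 Hc). }
      destruct (Hu Z HZ I _ Hcone) as [u [Hu1 [Hu2 Hu3]]].
      transitivity (u z).
      + apply Hu3; auto.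
      + symmetry. apply Hu3; auto; intros i z'; symmetry; apply Hpi.
    - split; [exact Hc|]. intros Z HZ _ q Hq. exact (Hu Z HZ I q Hq). }
  split.
  { intros D HD C c [HC [_ [Hcc Hu]]] yc Hyc.
    split; [exact (YX_cat Th HT1 HTpb C HC yc Hyc)|].
    split; [exact (YX_sep Th HT1 HTpb C HC yc Hyc)|].
    split.
    - split.
      + intro i. apply TFun_comp with C; [apply (proj1 Hcc)| exact (yc_TFun Th HT1 HTpb C HC yc Hyc)].
      + intros e x. rewrite (proj2 Hcc). reflexivity.
    - intros Z HZ HS q Hq. destruct (Hu Z HZ I q Hq) as [u0 [Hu01 [Hu02 Hu03]]].
      destruct (YX_refl Th HT1 HTpb C HC yc Hyc) as [_ [_ [_ HR]]].
      destruct (HR Z HZ HS u0 Hu01) as [g [Hg1 [Hg2 Hg3]]].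
      exists g. split; [exact Hg1|]. split.
      + intros i x. rewrite Hg2. apply Hu02.
      + intros u' Hu' Heq w. apply Hg3; auto. intro x.
        apply (Hu03 (fun x => u' (yc x))); auto.
        apply TFun_comp with (YX Th C); auto. exact (yc_TFun Th HT1 HTpb C HC yc Hyc). }
  intros X Y HX HSX HY HSY f Hf. split.
  - apply epi_dense; auto.
  - apply dense_epi; auto.
Qed.
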